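(* (i) For every integer $q\in\{1,\dots,6\}$, the optimal value $A_q$ of the linear program in real variables $\omega_1,\dots,\omega_6,\chi$ — maximize $\frac{q}{q+1}\cdot\frac78\chi-\sum_{j=1}^q\frac{\omega_j}{j(j+1)}$ subject to $\omega_i\le\omega_{i+1}$ ($i=1,\dots,5$), $\chi-\omega_1\le1$, $2\chi-\omega_2-\omega_3\le1$, $3\chi-3\omega_5\le1$, $\chi\ge2$, $\omega_q\le\frac78\chi$ — satisfies $A_q\le\frac12$. (ii) For every pair of integers $(p,q)$ with $1\le p\le5$ and $p\le q\le10$, the optimal value $B_{p,q}$ of the linear program in real variables $\omega_1,\dots,\omega_{10},\chi$ — maximize $\frac1p+\left(\frac{q}{q+1}\cdot\frac78-\frac12\right)\chi-\sum_{j=p}^q\frac{\omega_j}{j(j+1)}$ subject to $\omega_i\le\omega_{i+1}$ ($i=1,\dots,9$), $\chi-\omega_1\le1$, $2\chi-\omega_2-\omega_3\le1$, $3\chi-\omega_3-\omega_4-\omega_5\le1$, $4\chi-4\omega_7\le1$, $\omega_{p-1}\le1$ (omitted when $p=1$), $\omega_p\ge1$, $\omega_q\le\frac78\chi$ — satisfies $B_{p,q}\le\frac12$. (iii) Consequently, for every edge-colored graph $H$, every feasible solution $x$ of the \textsc{MinECC} LP relaxation, and every edge $e$ with $x_e=\max_{w\in e}x_w^{\ell(e)}\in(\frac18,\frac34)$, the output $Y$ of GenColorRound applied to $x$ with $I=(\frac12,\frac78)$ satisfies $\Pr[e\in\mathcal M_Y]\le\frac43x_e$.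
   Context: An edge-colored graph is $H=(V,E,C,\ell)$ with colors $C=[k]$, $\ell\colon E\to C$, every edge a set of exactly two nodes. A node coloring $Y\colon V\to C$ makes a mistake at $e$ ($e\in\mathcal M_Y$) if some $w\in e$ has $Y[w]\ne\ell(e)$. The \textsc{MinECC} LP relaxation constraints: $\sum_{i=1}^k x_w^i=k-1$ for all $w\in V$; $x_e\ge x_w^{\ell(e)}$ for $w\in e$; $0\le x_w^i\le1$; $0\le x_e\le 1$. GenColorRound with interval $I$, applied to $x$: draw $\rho$ uniformly from $I$ and, independently, a uniformly random permutation $\pi$ of $[k]$; let $S_i=\{w: x_w^i<\rho\}$; for $w\in\bigcup_iS_i$ set $Y[w]=\pi(j)$ with $j$ the largest index such that $w\in S_{\pi(j)}$; other nodes get an arbitrary color. *)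

(* Defs.v *)
From HB Require Import structures.
From mathcomp Require Import all_boot all_order all_algebra all_fingroup.
From mathcomp Require Import all_classical all_reals all_analysis.
Set Implicit Arguments. Unset Strict Implicit. Unset Printing Implicit Defensive.
Import Order.TTheory GRing.Theory Num.Theory.
Local Open Scope ring_scope.
Local Open Scope classical_set_scope.

Section LPs.
Variable R : realType.

Definition A_feasible (q : nat) (w : nat -> R) (chi : R) : Prop :=
  (forall i : nat, (1 <= i <= 5)%N -> w i <= w i.+1) /\
  chi - w 1%N <= 1 /\
  2 * chi - w 2%N - w 3%N <= 1 /\
  3 * chi - 3 * w 5%N <= 1 /\
  2 <= chi /\
  w q <= 7 / 8 * chi.

Definition A_obj (q : nat) (w : nat -> R) (chi : R) : R :=
  q%:R / (q.+1)%:R * (7 / 8) * chi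
  - \sum_(1 <= j < q.+1) w j / (j * j.+1)%:R.

Definition A_val (q : nat) : \bar R :=
  ereal_sup [set y : \bar R | exists (w : nat -> R) (chi : R),
                       A_feasible q w chi /\ y = (A_obj q w chi)%:E].

Definition B_feasible (p q : nat) (w : nat -> R) (chi : R) : Prop :=
  (forall i : nat, (1 <= i <= 9)%N -> w i <= w i.+1) /\
  chi - w 1%N <= 1 /\
  2 * chi - w 2%N - w 3%N <= 1 /\
  3 * chi - w 3%N - w 4%N - w 5%N <= 1 /\
  4 * chi - 4 * w 7%N <= 1 /\
  ((1 < p)%N -> w p.-1 <= 1) /\
  1 <= w p /\
  w q <= 7 / 8 * chi.

Definition B_obj (p q : nat) (w : nat -> R) (chi : R) : R :=
  1 / p%:R + (q%:R / (q.+1)%:R * (7 / 8) - 1 / 2) * chi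
  - \sum_(p <= j < q.+1) w j / (j * j.+1)%:R.

Definition B_val (p q : nat) : \bar R :=
  ereal_sup [set y : \bar R | exists (w : nat -> R) (chi : R),
                       B_feasible p q w chi /\ y = (B_obj p q w chi)%:E].
End LPs.

Section ECC.
Variable R : realType.
Variables (V E : finType) (k : nat).
Variable ends : E -> {set V}.
Variable lab : E -> 'I_k.

Definition edge_colored_graph : Prop := forall e : E, #|ends e| = 2%N.

(* feasibility for the MinECC LP relaxation; x w i = x_w^i, xe e = x_e *)
Definition minecc_feasible (x : V -> 'I_k -> R) (xe : E -> R) : Prop :=
  (forall w : V, \sum_(i < k) x w i = k%:R - 1) /\
  (forall (e : E) (w : V), w \in ends e -> x w (lab e) <= xe e) /\
  (forall (w : V) (i : 'I_k), 0 <= x w i <= 1) /\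
  (forall e : E, 0 <= xe e <= 1).

(* color produced by GenColorRound for threshold rho and permutation pi:
   S_i = {w | x_w^i < rho}; if w lies in some S_i, Y[w] = pi(j) for the largest
   index j with w in S_(pi j); otherwise Y[w] = d w (an arbitrary color). *)
Definition gcr_color (x : V -> 'I_k -> R) (d : V -> 'I_k)
    (rho : R) (pi : {perm 'I_k}) (w : V) : 'I_k :=
  match [pick j : 'I_k | (x w (pi j) < rho) &&
            [forall j' : 'I_k, (j < j')%N ==> ~~ (x w (pi j') < rho)]] with
  | Some j => pi j
  | None => d w
  end.

Definition gcr_mistake (x : V -> 'I_k -> R) (d : V -> 'I_k)
    (rho : R) (pi : {perm 'I_k}) (e : E) : Prop :=
  exists2 w, w \in ends e & gcr_color x d rho pi w != lab e.

(* Pr[e in M_Y] when rho is uniform on the open interval (a, b) and pi is an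
   independent uniformly random permutation of [k]. *)
Definition gcr_prob_mistake (a b : R) (x : V -> 'I_k -> R) (d : V -> 'I_k)
    (e : E) : \bar R :=
  ((\sum_(pi : {perm 'I_k})
      (@lebesgue_measure R) [set rho : R | (a < rho < b)%R /\ gcr_mistake x d rho pi e])
   * ((#|{perm 'I_k}|%:R * (b - a))^-1)%:E)%E.
End ECC.

(* Main.v *)
Require Import Defs.
From HB Require Import structures.
From mathcomp Require Import all_boot all_order all_algebra all_fingroup.
From mathcomp Require Import all_classical all_reals all_analysis.
From mathcomp Require Import ring lra zify.
Set Implicit Arguments. Unset Strict Implicit. Unset Printing Implicit Defensive.
Import Order.TTheory GRing.Theory Num.Theory.
Local Open Scope ring_scope.
Section K.
Variable R : realFieldType.
Definition Gf (T z : R) := Num.max 0 (7/8 - Num.max T z).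
Lemma Gf_le1 T z : T < 7/8 -> Gf T z <= 7/8 - T.
Proof. move=> h; rewrite /Gf ge_max; apply/andP; split; first lra.
by rewrite lerD2l lerN2 le_max lexx. Qed.
Lemma Gf_le2 T z : z <= 7/8 -> Gf T z <= 7/8 - z.
Proof. move=> h; rewrite /Gf ge_max; apply/andP; split; first lra.
by rewrite lerD2l lerN2 le_max lexx orbT. Qed.
Lemma Gf_0 T z : 7/8 <= z -> Gf T z <= 0.
Proof. move=> h; rewrite /Gf ge_max lexx /= subr_le0 le_max; apply/orP; right; exact: h. Qed.

Lemma key (t : R) (r : nat -> R) :
  1/8 < t -> t < 3/4 ->
  (forall j, r j <= r j.+1) ->
  (forall j, r j <= 1) ->
  1 - t <= r 0%N ->
  (1 - r 1%N) + (1 - r 2%N) <= t ->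
  (1 - r 2%N) + (1 - r 3%N) + (1 - r 4%N) <= t ->
  4 * (1 - r 6%N) <= t ->
  \sum_(0 <= j < 10) Gf (Num.max (1/2) t) (r j) / (j.+1 * j.+2)%:R
    <= t/2 - (Num.max (1/2) t - 1/2).
Proof.
move=> t1 t2 m r1 c0 c1 c2 c3.
have m0 := m 0%N.
have m1 := m 1%N.
have m2 := m 2%N.
have m3 := m 3%N.
have m4 := m 4%N.
have m5 := m 5%N.
have m6 := m 6%N.
have m7 := m 7%N.
have m8 := m 8%N.
have m9 := m 9%N.
have m10 := m 10%N.
have r9' := r1 9%N.
have [tl|tl] := lerP t (1/2).
{ have T78 : 1/2 < 7/8 :> R by lra.
 rewrite /index_iota /= !big_cons big_nil /=.
have [q9|q9] := lerP (r 9%N) (7/8).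
{ have h9 : r 9%N <= 7/8 := q9.
  have h8 : r 8%N <= 7/8 := le_trans (m 8%N) h9.
  have h7 : r 7%N <= 7/8 := le_trans (m 7%N) h8.
  have h6 : r 6%N <= 7/8 := le_trans (m 6%N) h7.
  have h5 : r 5%N <= 7/8 := le_trans (m 5%N) h6.
  have h4 : r 4%N <= 7/8 := le_trans (m 4%N) h5.
  have h3 : r 3%N <= 7/8 := le_trans (m 3%N) h4.
  have h2 : r 2%N <= 7/8 := le_trans (m 2%N) h3.
  have h1 : r 1%N <= 7/8 := le_trans (m 1%N) h2.
  have h0 : r 0%N <= 7/8 := le_trans (m 0%N) h1.
  have g0 := @Gf_le2 (1/2) (r 0%N) h0.
  have f0 := @Gf_le1 (1/2) (r 0%N) T78.
  have g1 := @Gf_le2 (1/2) (r 1%N) h1.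
  have f1 := @Gf_le1 (1/2) (r 1%N) T78.
  have g2 := @Gf_le2 (1/2) (r 2%N) h2.
  have f2 := @Gf_le1 (1/2) (r 2%N) T78.
  have g3 := @Gf_le2 (1/2) (r 3%N) h3.
  have f3 := @Gf_le1 (1/2) (r 3%N) T78.
  have g4 := @Gf_le2 (1/2) (r 4%N) h4.
  have f4 := @Gf_le1 (1/2) (r 4%N) T78.
  have g5 := @Gf_le2 (1/2) (r 5%N) h5.
  have f5 := @Gf_le1 (1/2) (r 5%N) T78.
  have g6 := @Gf_le2 (1/2) (r 6%N) h6.
  have f6 := @Gf_le1 (1/2) (r 6%N) T78.
  have g7 := @Gf_le2 (1/2) (r 7%N) h7.
  have f7 := @Gf_le1 (1/2) (r 7%N) T78.
  have g8 := @Gf_le2 (1/2) (r 8%N) h8.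
  have f8 := @Gf_le1 (1/2) (r 8%N) T78.
  have g9 := @Gf_le2 (1/2) (r 9%N) h9.
  have f9 := @Gf_le1 (1/2) (r 9%N) T78.
  clear -t1 t2 tl c0 c1 c2 c3 m0 m1 m2 m3 m4 m5 m6 m7 m8 m9 r9' g0 f0 g1 f1 g2 f2 g3 f3 g4 f4 g5 f5 g6 f6 g7 f7 g8 f8 g9 f9.
  lra. }
have [q8|q8] := lerP (r 8%N) (7/8).
{ have h8 : r 8%N <= 7/8 := q8.
  have h7 : r 7%N <= 7/8 := le_trans (m 7%N) h8.
  have h6 : r 6%N <= 7/8 := le_trans (m 6%N) h7.
  have h5 : r 5%N <= 7/8 := le_trans (m 5%N) h6.
  have h4 : r 4%N <= 7/8 := le_trans (m 4%N) h5.
  have h3 : r 3%N <= 7/8 := le_trans (m 3%N) h4.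
  have h2 : r 2%N <= 7/8 := le_trans (m 2%N) h3.
  have h1 : r 1%N <= 7/8 := le_trans (m 1%N) h2.
  have h0 : r 0%N <= 7/8 := le_trans (m 0%N) h1.
  have h9 : 7/8 <= r 9%N := ltW q9.
  have g0 := @Gf_le2 (1/2) (r 0%N) h0.
  have f0 := @Gf_le1 (1/2) (r 0%N) T78.
  have g1 := @Gf_le2 (1/2) (r 1%N) h1.
  have f1 := @Gf_le1 (1/2) (r 1%N) T78.
  have g2 := @Gf_le2 (1/2) (r 2%N) h2.
  have f2 := @Gf_le1 (1/2) (r 2%N) T78.
  have g3 := @Gf_le2 (1/2) (r 3%N) h3.
  have f3 := @Gf_le1 (1/2) (r 3%N) T78.
  have g4 := @Gf_le2 (1/2) (r 4%N) h4.
  have f4 := @Gf_le1 (1/2) (r 4%N) T78.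
  have g5 := @Gf_le2 (1/2) (r 5%N) h5.
  have f5 := @Gf_le1 (1/2) (r 5%N) T78.
  have g6 := @Gf_le2 (1/2) (r 6%N) h6.
  have f6 := @Gf_le1 (1/2) (r 6%N) T78.
  have g7 := @Gf_le2 (1/2) (r 7%N) h7.
  have f7 := @Gf_le1 (1/2) (r 7%N) T78.
  have g8 := @Gf_le2 (1/2) (r 8%N) h8.
  have f8 := @Gf_le1 (1/2) (r 8%N) T78.
  have g9 := @Gf_0 (1/2) (r 9%N) h9.
  have f9 := @Gf_le1 (1/2) (r 9%N) T78.
  clear -t1 t2 tl c0 c1 c2 c3 m0 m1 m2 m3 m4 m5 m6 m7 m8 m9 r9' g0 f0 g1 f1 g2 f2 g3 f3 g4 f4 g5 f5 g6 f6 g7 f7 g8 f8 g9 f9.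
  lra. }
have [q7|q7] := lerP (r 7%N) (7/8).
{ have h7 : r 7%N <= 7/8 := q7.
  have h6 : r 6%N <= 7/8 := le_trans (m 6%N) h7.
  have h5 : r 5%N <= 7/8 := le_trans (m 5%N) h6.
  have h4 : r 4%N <= 7/8 := le_trans (m 4%N) h5.
  have h3 : r 3%N <= 7/8 := le_trans (m 3%N) h4.
  have h2 : r 2%N <= 7/8 := le_trans (m 2%N) h3.
  have h1 : r 1%N <= 7/8 := le_trans (m 1%N) h2.
  have h0 : r 0%N <= 7/8 := le_trans (m 0%N) h1.
  have h8 : 7/8 <= r 8%N := ltW q8.
  have h9 : 7/8 <= r 9%N := le_trans h8 (m 8%N).
  have g0 := @Gf_le2 (1/2) (r 0%N) h0.
  have f0 := @Gf_le1 (1/2) (r 0%N) T78.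
  have g1 := @Gf_le2 (1/2) (r 1%N) h1.
  have f1 := @Gf_le1 (1/2) (r 1%N) T78.
  have g2 := @Gf_le2 (1/2) (r 2%N) h2.
  have f2 := @Gf_le1 (1/2) (r 2%N) T78.
  have g3 := @Gf_le2 (1/2) (r 3%N) h3.
  have f3 := @Gf_le1 (1/2) (r 3%N) T78.
  have g4 := @Gf_le2 (1/2) (r 4%N) h4.
  have f4 := @Gf_le1 (1/2) (r 4%N) T78.
  have g5 := @Gf_le2 (1/2) (r 5%N) h5.
  have f5 := @Gf_le1 (1/2) (r 5%N) T78.
  have g6 := @Gf_le2 (1/2) (r 6%N) h6.
  have f6 := @Gf_le1 (1/2) (r 6%N) T78.
  have g7 := @Gf_le2 (1/2) (r 7%N) h7.
  have f7 := @Gf_le1 (1/2) (r 7%N) T78.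
  have g8 := @Gf_0 (1/2) (r 8%N) h8.
  have f8 := @Gf_le1 (1/2) (r 8%N) T78.
  have g9 := @Gf_0 (1/2) (r 9%N) h9.
  have f9 := @Gf_le1 (1/2) (r 9%N) T78.
  clear -t1 t2 tl c0 c1 c2 c3 m0 m1 m2 m3 m4 m5 m6 m7 m8 m9 r9' g0 f0 g1 f1 g2 f2 g3 f3 g4 f4 g5 f5 g6 f6 g7 f7 g8 f8 g9 f9.
  lra. }
have [q6|q6] := lerP (r 6%N) (7/8).
{ have h6 : r 6%N <= 7/8 := q6.
  have h5 : r 5%N <= 7/8 := le_trans (m 5%N) h6.
  have h4 : r 4%N <= 7/8 := le_trans (m 4%N) h5.
  have h3 : r 3%N <= 7/8 := le_trans (m 3%N) h4.
  have h2 : r 2%N <= 7/8 := le_trans (m 2%N) h3.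
  have h1 : r 1%N <= 7/8 := le_trans (m 1%N) h2.
  have h0 : r 0%N <= 7/8 := le_trans (m 0%N) h1.
  have h7 : 7/8 <= r 7%N := ltW q7.
  have h8 : 7/8 <= r 8%N := le_trans h7 (m 7%N).
  have h9 : 7/8 <= r 9%N := le_trans h8 (m 8%N).
  have g0 := @Gf_le2 (1/2) (r 0%N) h0.
  have f0 := @Gf_le1 (1/2) (r 0%N) T78.
  have g1 := @Gf_le2 (1/2) (r 1%N) h1.
  have f1 := @Gf_le1 (1/2) (r 1%N) T78.
  have g2 := @Gf_le2 (1/2) (r 2%N) h2.
  have f2 := @Gf_le1 (1/2) (r 2%N) T78.
  have g3 := @Gf_le2 (1/2) (r 3%N) h3.
  have f3 := @Gf_le1 (1/2) (r 3%N) T78.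
  have g4 := @Gf_le2 (1/2) (r 4%N) h4.
  have f4 := @Gf_le1 (1/2) (r 4%N) T78.
  have g5 := @Gf_le2 (1/2) (r 5%N) h5.
  have f5 := @Gf_le1 (1/2) (r 5%N) T78.
  have g6 := @Gf_le2 (1/2) (r 6%N) h6.
  have f6 := @Gf_le1 (1/2) (r 6%N) T78.
  have g7 := @Gf_0 (1/2) (r 7%N) h7.
  have f7 := @Gf_le1 (1/2) (r 7%N) T78.
  have g8 := @Gf_0 (1/2) (r 8%N) h8.
  have f8 := @Gf_le1 (1/2) (r 8%N) T78.
  have g9 := @Gf_0 (1/2) (r 9%N) h9.
  have f9 := @Gf_le1 (1/2) (r 9%N) T78.
  clear -t1 t2 tl c0 c1 c2 c3 m0 m1 m2 m3 m4 m5 m6 m7 m8 m9 r9' g0 f0 g1 f1 g2 f2 g3 f3 g4 f4 g5 f5 g6 f6 g7 f7 g8 f8 g9 f9.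
  lra. }
have [q5|q5] := lerP (r 5%N) (7/8).
{ have h5 : r 5%N <= 7/8 := q5.
  have h4 : r 4%N <= 7/8 := le_trans (m 4%N) h5.
  have h3 : r 3%N <= 7/8 := le_trans (m 3%N) h4.
  have h2 : r 2%N <= 7/8 := le_trans (m 2%N) h3.
  have h1 : r 1%N <= 7/8 := le_trans (m 1%N) h2.
  have h0 : r 0%N <= 7/8 := le_trans (m 0%N) h1.
  have h6 : 7/8 <= r 6%N := ltW q6.
  have h7 : 7/8 <= r 7%N := le_trans h6 (m 6%N).
  have h8 : 7/8 <= r 8%N := le_trans h7 (m 7%N).
  have h9 : 7/8 <= r 9%N := le_trans h8 (m 8%N).
  have g0 := @Gf_le2 (1/2) (r 0%N) h0.
  have f0 := @Gf_le1 (1/2) (r 0%N) T78.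
  have g1 := @Gf_le2 (1/2) (r 1%N) h1.
  have f1 := @Gf_le1 (1/2) (r 1%N) T78.
  have g2 := @Gf_le2 (1/2) (r 2%N) h2.
  have f2 := @Gf_le1 (1/2) (r 2%N) T78.
  have g3 := @Gf_le2 (1/2) (r 3%N) h3.
  have f3 := @Gf_le1 (1/2) (r 3%N) T78.
  have g4 := @Gf_le2 (1/2) (r 4%N) h4.
  have f4 := @Gf_le1 (1/2) (r 4%N) T78.
  have g5 := @Gf_le2 (1/2) (r 5%N) h5.
  have f5 := @Gf_le1 (1/2) (r 5%N) T78.
  have g6 := @Gf_0 (1/2) (r 6%N) h6.
  have f6 := @Gf_le1 (1/2) (r 6%N) T78.
  have g7 := @Gf_0 (1/2) (r 7%N) h7.
  have f7 := @Gf_le1 (1/2) (r 7%N) T78.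
  have g8 := @Gf_0 (1/2) (r 8%N) h8.
  have f8 := @Gf_le1 (1/2) (r 8%N) T78.
  have g9 := @Gf_0 (1/2) (r 9%N) h9.
  have f9 := @Gf_le1 (1/2) (r 9%N) T78.
  clear -t1 t2 tl c0 c1 c2 c3 m0 m1 m2 m3 m4 m5 m6 m7 m8 m9 r9' g0 f0 g1 f1 g2 f2 g3 f3 g4 f4 g5 f5 g6 f6 g7 f7 g8 f8 g9 f9.
  lra. }
have [q4|q4] := lerP (r 4%N) (7/8).
{ have h4 : r 4%N <= 7/8 := q4.
  have h3 : r 3%N <= 7/8 := le_trans (m 3%N) h4.
  have h2 : r 2%N <= 7/8 := le_trans (m 2%N) h3.
  have h1 : r 1%N <= 7/8 := le_trans (m 1%N) h2.
  have h0 : r 0%N <= 7/8 := le_trans (m 0%N) h1.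
  have h5 : 7/8 <= r 5%N := ltW q5.
  have h6 : 7/8 <= r 6%N := le_trans h5 (m 5%N).
  have h7 : 7/8 <= r 7%N := le_trans h6 (m 6%N).
  have h8 : 7/8 <= r 8%N := le_trans h7 (m 7%N).
  have h9 : 7/8 <= r 9%N := le_trans h8 (m 8%N).
  have g0 := @Gf_le2 (1/2) (r 0%N) h0.
  have f0 := @Gf_le1 (1/2) (r 0%N) T78.
  have g1 := @Gf_le2 (1/2) (r 1%N) h1.
  have f1 := @Gf_le1 (1/2) (r 1%N) T78.
  have g2 := @Gf_le2 (1/2) (r 2%N) h2.
  have f2 := @Gf_le1 (1/2) (r 2%N) T78.
  have g3 := @Gf_le2 (1/2) (r 3%N) h3.
  have f3 := @Gf_le1 (1/2) (r 3%N) T78.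
  have g4 := @Gf_le2 (1/2) (r 4%N) h4.
  have f4 := @Gf_le1 (1/2) (r 4%N) T78.
  have g5 := @Gf_0 (1/2) (r 5%N) h5.
  have f5 := @Gf_le1 (1/2) (r 5%N) T78.
  have g6 := @Gf_0 (1/2) (r 6%N) h6.
  have f6 := @Gf_le1 (1/2) (r 6%N) T78.
  have g7 := @Gf_0 (1/2) (r 7%N) h7.
  have f7 := @Gf_le1 (1/2) (r 7%N) T78.
  have g8 := @Gf_0 (1/2) (r 8%N) h8.
  have f8 := @Gf_le1 (1/2) (r 8%N) T78.
  have g9 := @Gf_0 (1/2) (r 9%N) h9.
  have f9 := @Gf_le1 (1/2) (r 9%N) T78.
  clear -t1 t2 tl c0 c1 c2 c3 m0 m1 m2 m3 m4 m5 m6 m7 m8 m9 r9' g0 f0 g1 f1 g2 f2 g3 f3 g4 f4 g5 f5 g6 f6 g7 f7 g8 f8 g9 f9.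
  lra. }
have [q3|q3] := lerP (r 3%N) (7/8).
{ have h3 : r 3%N <= 7/8 := q3.
  have h2 : r 2%N <= 7/8 := le_trans (m 2%N) h3.
  have h1 : r 1%N <= 7/8 := le_trans (m 1%N) h2.
  have h0 : r 0%N <= 7/8 := le_trans (m 0%N) h1.
  have h4 : 7/8 <= r 4%N := ltW q4.
  have h5 : 7/8 <= r 5%N := le_trans h4 (m 4%N).
  have h6 : 7/8 <= r 6%N := le_trans h5 (m 5%N).
  have h7 : 7/8 <= r 7%N := le_trans h6 (m 6%N).
  have h8 : 7/8 <= r 8%N := le_trans h7 (m 7%N).
  have h9 : 7/8 <= r 9%N := le_trans h8 (m 8%N).
  have g0 := @Gf_le2 (1/2) (r 0%N) h0.
  have f0 := @Gf_le1 (1/2) (r 0%N) T78.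
  have g1 := @Gf_le2 (1/2) (r 1%N) h1.
  have f1 := @Gf_le1 (1/2) (r 1%N) T78.
  have g2 := @Gf_le2 (1/2) (r 2%N) h2.
  have f2 := @Gf_le1 (1/2) (r 2%N) T78.
  have g3 := @Gf_le2 (1/2) (r 3%N) h3.
  have f3 := @Gf_le1 (1/2) (r 3%N) T78.
  have g4 := @Gf_0 (1/2) (r 4%N) h4.
  have f4 := @Gf_le1 (1/2) (r 4%N) T78.
  have g5 := @Gf_0 (1/2) (r 5%N) h5.
  have f5 := @Gf_le1 (1/2) (r 5%N) T78.
  have g6 := @Gf_0 (1/2) (r 6%N) h6.
  have f6 := @Gf_le1 (1/2) (r 6%N) T78.
  have g7 := @Gf_0 (1/2) (r 7%N) h7.
  have f7 := @Gf_le1 (1/2) (r 7%N) T78.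
  have g8 := @Gf_0 (1/2) (r 8%N) h8.
  have f8 := @Gf_le1 (1/2) (r 8%N) T78.
  have g9 := @Gf_0 (1/2) (r 9%N) h9.
  have f9 := @Gf_le1 (1/2) (r 9%N) T78.
  clear -t1 t2 tl c0 c1 c2 c3 m0 m1 m2 m3 m4 m5 m6 m7 m8 m9 r9' g0 f0 g1 f1 g2 f2 g3 f3 g4 f4 g5 f5 g6 f6 g7 f7 g8 f8 g9 f9.
  lra. }
have [q2|q2] := lerP (r 2%N) (7/8).
{ have h2 : r 2%N <= 7/8 := q2.
  have h1 : r 1%N <= 7/8 := le_trans (m 1%N) h2.
  have h0 : r 0%N <= 7/8 := le_trans (m 0%N) h1.
  have h3 : 7/8 <= r 3%N := ltW q3.
  have h4 : 7/8 <= r 4%N := le_trans h3 (m 3%N).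
  have h5 : 7/8 <= r 5%N := le_trans h4 (m 4%N).
  have h6 : 7/8 <= r 6%N := le_trans h5 (m 5%N).
  have h7 : 7/8 <= r 7%N := le_trans h6 (m 6%N).
  have h8 : 7/8 <= r 8%N := le_trans h7 (m 7%N).
  have h9 : 7/8 <= r 9%N := le_trans h8 (m 8%N).
  have g0 := @Gf_le2 (1/2) (r 0%N) h0.
  have f0 := @Gf_le1 (1/2) (r 0%N) T78.
  have g1 := @Gf_le2 (1/2) (r 1%N) h1.
  have f1 := @Gf_le1 (1/2) (r 1%N) T78.
  have g2 := @Gf_le2 (1/2) (r 2%N) h2.
  have f2 := @Gf_le1 (1/2) (r 2%N) T78.
  have g3 := @Gf_0 (1/2) (r 3%N) h3.
  have f3 := @Gf_le1 (1/2) (r 3%N) T78.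
  have g4 := @Gf_0 (1/2) (r 4%N) h4.
  have f4 := @Gf_le1 (1/2) (r 4%N) T78.
  have g5 := @Gf_0 (1/2) (r 5%N) h5.
  have f5 := @Gf_le1 (1/2) (r 5%N) T78.
  have g6 := @Gf_0 (1/2) (r 6%N) h6.
  have f6 := @Gf_le1 (1/2) (r 6%N) T78.
  have g7 := @Gf_0 (1/2) (r 7%N) h7.
  have f7 := @Gf_le1 (1/2) (r 7%N) T78.
  have g8 := @Gf_0 (1/2) (r 8%N) h8.
  have f8 := @Gf_le1 (1/2) (r 8%N) T78.
  have g9 := @Gf_0 (1/2) (r 9%N) h9.
  have f9 := @Gf_le1 (1/2) (r 9%N) T78.
  clear -t1 t2 tl c0 c1 c2 c3 m0 m1 m2 m3 m4 m5 m6 m7 m8 m9 r9' g0 f0 g1 f1 g2 f2 g3 f3 g4 f4 g5 f5 g6 f6 g7 f7 g8 f8 g9 f9.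
  lra. }
have [q1|q1] := lerP (r 1%N) (7/8).
{ have h1 : r 1%N <= 7/8 := q1.
  have h0 : r 0%N <= 7/8 := le_trans (m 0%N) h1.
  have h2 : 7/8 <= r 2%N := ltW q2.
  have h3 : 7/8 <= r 3%N := le_trans h2 (m 2%N).
  have h4 : 7/8 <= r 4%N := le_trans h3 (m 3%N).
  have h5 : 7/8 <= r 5%N := le_trans h4 (m 4%N).
  have h6 : 7/8 <= r 6%N := le_trans h5 (m 5%N).
  have h7 : 7/8 <= r 7%N := le_trans h6 (m 6%N).
  have h8 : 7/8 <= r 8%N := le_trans h7 (m 7%N).
  have h9 : 7/8 <= r 9%N := le_trans h8 (m 8%N).
  have g0 := @Gf_le2 (1/2) (r 0%N) h0.
  have f0 := @Gf_le1 (1/2) (r 0%N) T78.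
  have g1 := @Gf_le2 (1/2) (r 1%N) h1.
  have f1 := @Gf_le1 (1/2) (r 1%N) T78.
  have g2 := @Gf_0 (1/2) (r 2%N) h2.
  have f2 := @Gf_le1 (1/2) (r 2%N) T78.
  have g3 := @Gf_0 (1/2) (r 3%N) h3.
  have f3 := @Gf_le1 (1/2) (r 3%N) T78.
  have g4 := @Gf_0 (1/2) (r 4%N) h4.
  have f4 := @Gf_le1 (1/2) (r 4%N) T78.
  have g5 := @Gf_0 (1/2) (r 5%N) h5.
  have f5 := @Gf_le1 (1/2) (r 5%N) T78.
  have g6 := @Gf_0 (1/2) (r 6%N) h6.
  have f6 := @Gf_le1 (1/2) (r 6%N) T78.
  have g7 := @Gf_0 (1/2) (r 7%N) h7.
  have f7 := @Gf_le1 (1/2) (r 7%N) T78.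
  have g8 := @Gf_0 (1/2) (r 8%N) h8.
  have f8 := @Gf_le1 (1/2) (r 8%N) T78.
  have g9 := @Gf_0 (1/2) (r 9%N) h9.
  have f9 := @Gf_le1 (1/2) (r 9%N) T78.
  clear -t1 t2 tl c0 c1 c2 c3 m0 m1 m2 m3 m4 m5 m6 m7 m8 m9 r9' g0 f0 g1 f1 g2 f2 g3 f3 g4 f4 g5 f5 g6 f6 g7 f7 g8 f8 g9 f9.
  lra. }
have [q0|q0] := lerP (r 0%N) (7/8).
{ have h0 : r 0%N <= 7/8 := q0.
  have h1 : 7/8 <= r 1%N := ltW q1.
  have h2 : 7/8 <= r 2%N := le_trans h1 (m 1%N).
  have h3 : 7/8 <= r 3%N := le_trans h2 (m 2%N).
  have h4 : 7/8 <= r 4%N := le_trans h3 (m 3%N).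
  have h5 : 7/8 <= r 5%N := le_trans h4 (m 4%N).
  have h6 : 7/8 <= r 6%N := le_trans h5 (m 5%N).
  have h7 : 7/8 <= r 7%N := le_trans h6 (m 6%N).
  have h8 : 7/8 <= r 8%N := le_trans h7 (m 7%N).
  have h9 : 7/8 <= r 9%N := le_trans h8 (m 8%N).
  have g0 := @Gf_le2 (1/2) (r 0%N) h0.
  have f0 := @Gf_le1 (1/2) (r 0%N) T78.
  have g1 := @Gf_0 (1/2) (r 1%N) h1.
  have f1 := @Gf_le1 (1/2) (r 1%N) T78.
  have g2 := @Gf_0 (1/2) (r 2%N) h2.
  have f2 := @Gf_le1 (1/2) (r 2%N) T78.
  have g3 := @Gf_0 (1/2) (r 3%N) h3.
  have f3 := @Gf_le1 (1/2) (r 3%N) T78.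
  have g4 := @Gf_0 (1/2) (r 4%N) h4.
  have f4 := @Gf_le1 (1/2) (r 4%N) T78.
  have g5 := @Gf_0 (1/2) (r 5%N) h5.
  have f5 := @Gf_le1 (1/2) (r 5%N) T78.
  have g6 := @Gf_0 (1/2) (r 6%N) h6.
  have f6 := @Gf_le1 (1/2) (r 6%N) T78.
  have g7 := @Gf_0 (1/2) (r 7%N) h7.
  have f7 := @Gf_le1 (1/2) (r 7%N) T78.
  have g8 := @Gf_0 (1/2) (r 8%N) h8.
  have f8 := @Gf_le1 (1/2) (r 8%N) T78.
  have g9 := @Gf_0 (1/2) (r 9%N) h9.
  have f9 := @Gf_le1 (1/2) (r 9%N) T78.
  clear -t1 t2 tl c0 c1 c2 c3 m0 m1 m2 m3 m4 m5 m6 m7 m8 m9 r9' g0 f0 g1 f1 g2 f2 g3 f3 g4 f4 g5 f5 g6 f6 g7 f7 g8 f8 g9 f9.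
  lra. }
{ have h0 : 7/8 <= r 0%N := ltW q0.
  have h1 : 7/8 <= r 1%N := le_trans h0 (m 0%N).
  have h2 : 7/8 <= r 2%N := le_trans h1 (m 1%N).
  have h3 : 7/8 <= r 3%N := le_trans h2 (m 2%N).
  have h4 : 7/8 <= r 4%N := le_trans h3 (m 3%N).
  have h5 : 7/8 <= r 5%N := le_trans h4 (m 4%N).
  have h6 : 7/8 <= r 6%N := le_trans h5 (m 5%N).
  have h7 : 7/8 <= r 7%N := le_trans h6 (m 6%N).
  have h8 : 7/8 <= r 8%N := le_trans h7 (m 7%N).
  have h9 : 7/8 <= r 9%N := le_trans h8 (m 8%N).
  have g0 := @Gf_0 (1/2) (r 0%N) h0.
  have f0 := @Gf_le1 (1/2) (r 0%N) T78.
  have g1 := @Gf_0 (1/2) (r 1%N) h1.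
  have f1 := @Gf_le1 (1/2) (r 1%N) T78.
  have g2 := @Gf_0 (1/2) (r 2%N) h2.
  have f2 := @Gf_le1 (1/2) (r 2%N) T78.
  have g3 := @Gf_0 (1/2) (r 3%N) h3.
  have f3 := @Gf_le1 (1/2) (r 3%N) T78.
  have g4 := @Gf_0 (1/2) (r 4%N) h4.
  have f4 := @Gf_le1 (1/2) (r 4%N) T78.
  have g5 := @Gf_0 (1/2) (r 5%N) h5.
  have f5 := @Gf_le1 (1/2) (r 5%N) T78.
  have g6 := @Gf_0 (1/2) (r 6%N) h6.
  have f6 := @Gf_le1 (1/2) (r 6%N) T78.
  have g7 := @Gf_0 (1/2) (r 7%N) h7.
  have f7 := @Gf_le1 (1/2) (r 7%N) T78.
  have g8 := @Gf_0 (1/2) (r 8%N) h8.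
  have f8 := @Gf_le1 (1/2) (r 8%N) T78.
  have g9 := @Gf_0 (1/2) (r 9%N) h9.
  have f9 := @Gf_le1 (1/2) (r 9%N) T78.
  clear -t1 t2 tl c0 c1 c2 c3 m0 m1 m2 m3 m4 m5 m6 m7 m8 m9 r9' g0 f0 g1 f1 g2 f2 g3 f3 g4 f4 g5 f5 g6 f6 g7 f7 g8 f8 g9 f9.
  lra. } }
have T78 : t < 7/8 by lra.
 rewrite /index_iota /= !big_cons big_nil /=.
have [q9|q9] := lerP (r 9%N) (7/8).
{ have h9 : r 9%N <= 7/8 := q9.
  have h8 : r 8%N <= 7/8 := le_trans (m 8%N) h9.
  have h7 : r 7%N <= 7/8 := le_trans (m 7%N) h8.
  have h6 : r 6%N <= 7/8 := le_trans (m 6%N) h7.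
  have h5 : r 5%N <= 7/8 := le_trans (m 5%N) h6.
  have h4 : r 4%N <= 7/8 := le_trans (m 4%N) h5.
  have h3 : r 3%N <= 7/8 := le_trans (m 3%N) h4.
  have h2 : r 2%N <= 7/8 := le_trans (m 2%N) h3.
  have h1 : r 1%N <= 7/8 := le_trans (m 1%N) h2.
  have h0 : r 0%N <= 7/8 := le_trans (m 0%N) h1.
  have g0 := @Gf_le2 t (r 0%N) h0.
  have f0 := @Gf_le1 t (r 0%N) T78.
  have g1 := @Gf_le2 t (r 1%N) h1.
  have f1 := @Gf_le1 t (r 1%N) T78.
  have g2 := @Gf_le2 t (r 2%N) h2.
  have f2 := @Gf_le1 t (r 2%N) T78.
  have g3 := @Gf_le2 t (r 3%N) h3.
  have f3 := @Gf_le1 t (r 3%N) T78.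
  have g4 := @Gf_le2 t (r 4%N) h4.
  have f4 := @Gf_le1 t (r 4%N) T78.
  have g5 := @Gf_le2 t (r 5%N) h5.
  have f5 := @Gf_le1 t (r 5%N) T78.
  have g6 := @Gf_le2 t (r 6%N) h6.
  have f6 := @Gf_le1 t (r 6%N) T78.
  have g7 := @Gf_le2 t (r 7%N) h7.
  have f7 := @Gf_le1 t (r 7%N) T78.
  have g8 := @Gf_le2 t (r 8%N) h8.
  have f8 := @Gf_le1 t (r 8%N) T78.
  have g9 := @Gf_le2 t (r 9%N) h9.
  have f9 := @Gf_le1 t (r 9%N) T78.
  clear -t1 t2 tl c0 c1 c2 c3 m0 m1 m2 m3 m4 m5 m6 m7 m8 m9 r9' g0 f0 g1 f1 g2 f2 g3 f3 g4 f4 g5 f5 g6 f6 g7 f7 g8 f8 g9 f9.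
  lra. }
have [q8|q8] := lerP (r 8%N) (7/8).
{ have h8 : r 8%N <= 7/8 := q8.
  have h7 : r 7%N <= 7/8 := le_trans (m 7%N) h8.
  have h6 : r 6%N <= 7/8 := le_trans (m 6%N) h7.
  have h5 : r 5%N <= 7/8 := le_trans (m 5%N) h6.
  have h4 : r 4%N <= 7/8 := le_trans (m 4%N) h5.
  have h3 : r 3%N <= 7/8 := le_trans (m 3%N) h4.
  have h2 : r 2%N <= 7/8 := le_trans (m 2%N) h3.
  have h1 : r 1%N <= 7/8 := le_trans (m 1%N) h2.
  have h0 : r 0%N <= 7/8 := le_trans (m 0%N) h1.
  have h9 : 7/8 <= r 9%N := ltW q9.
  have g0 := @Gf_le2 t (r 0%N) h0.
  have f0 := @Gf_le1 t (r 0%N) T78.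
  have g1 := @Gf_le2 t (r 1%N) h1.
  have f1 := @Gf_le1 t (r 1%N) T78.
  have g2 := @Gf_le2 t (r 2%N) h2.
  have f2 := @Gf_le1 t (r 2%N) T78.
  have g3 := @Gf_le2 t (r 3%N) h3.
  have f3 := @Gf_le1 t (r 3%N) T78.
  have g4 := @Gf_le2 t (r 4%N) h4.
  have f4 := @Gf_le1 t (r 4%N) T78.
  have g5 := @Gf_le2 t (r 5%N) h5.
  have f5 := @Gf_le1 t (r 5%N) T78.
  have g6 := @Gf_le2 t (r 6%N) h6.
  have f6 := @Gf_le1 t (r 6%N) T78.
  have g7 := @Gf_le2 t (r 7%N) h7.
  have f7 := @Gf_le1 t (r 7%N) T78.
  have g8 := @Gf_le2 t (r 8%N) h8.
  have f8 := @Gf_le1 t (r 8%N) T78.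
  have g9 := @Gf_0 t (r 9%N) h9.
  have f9 := @Gf_le1 t (r 9%N) T78.
  clear -t1 t2 tl c0 c1 c2 c3 m0 m1 m2 m3 m4 m5 m6 m7 m8 m9 r9' g0 f0 g1 f1 g2 f2 g3 f3 g4 f4 g5 f5 g6 f6 g7 f7 g8 f8 g9 f9.
  lra. }
have [q7|q7] := lerP (r 7%N) (7/8).
{ have h7 : r 7%N <= 7/8 := q7.
  have h6 : r 6%N <= 7/8 := le_trans (m 6%N) h7.
  have h5 : r 5%N <= 7/8 := le_trans (m 5%N) h6.
  have h4 : r 4%N <= 7/8 := le_trans (m 4%N) h5.
  have h3 : r 3%N <= 7/8 := le_trans (m 3%N) h4.
  have h2 : r 2%N <= 7/8 := le_trans (m 2%N) h3.
  have h1 : r 1%N <= 7/8 := le_trans (m 1%N) h2.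
  have h0 : r 0%N <= 7/8 := le_trans (m 0%N) h1.
  have h8 : 7/8 <= r 8%N := ltW q8.
  have h9 : 7/8 <= r 9%N := le_trans h8 (m 8%N).
  have g0 := @Gf_le2 t (r 0%N) h0.
  have f0 := @Gf_le1 t (r 0%N) T78.
  have g1 := @Gf_le2 t (r 1%N) h1.
  have f1 := @Gf_le1 t (r 1%N) T78.
  have g2 := @Gf_le2 t (r 2%N) h2.
  have f2 := @Gf_le1 t (r 2%N) T78.
  have g3 := @Gf_le2 t (r 3%N) h3.
  have f3 := @Gf_le1 t (r 3%N) T78.
  have g4 := @Gf_le2 t (r 4%N) h4.
  have f4 := @Gf_le1 t (r 4%N) T78.
  have g5 := @Gf_le2 t (r 5%N) h5.
  have f5 := @Gf_le1 t (r 5%N) T78.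
  have g6 := @Gf_le2 t (r 6%N) h6.
  have f6 := @Gf_le1 t (r 6%N) T78.
  have g7 := @Gf_le2 t (r 7%N) h7.
  have f7 := @Gf_le1 t (r 7%N) T78.
  have g8 := @Gf_0 t (r 8%N) h8.
  have f8 := @Gf_le1 t (r 8%N) T78.
  have g9 := @Gf_0 t (r 9%N) h9.
  have f9 := @Gf_le1 t (r 9%N) T78.
  clear -t1 t2 tl c0 c1 c2 c3 m0 m1 m2 m3 m4 m5 m6 m7 m8 m9 r9' g0 f0 g1 f1 g2 f2 g3 f3 g4 f4 g5 f5 g6 f6 g7 f7 g8 f8 g9 f9.
  lra. }
have [q6|q6] := lerP (r 6%N) (7/8).
{ have h6 : r 6%N <= 7/8 := q6.
  have h5 : r 5%N <= 7/8 := le_trans (m 5%N) h6.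
  have h4 : r 4%N <= 7/8 := le_trans (m 4%N) h5.
  have h3 : r 3%N <= 7/8 := le_trans (m 3%N) h4.
  have h2 : r 2%N <= 7/8 := le_trans (m 2%N) h3.
  have h1 : r 1%N <= 7/8 := le_trans (m 1%N) h2.
  have h0 : r 0%N <= 7/8 := le_trans (m 0%N) h1.
  have h7 : 7/8 <= r 7%N := ltW q7.
  have h8 : 7/8 <= r 8%N := le_trans h7 (m 7%N).
  have h9 : 7/8 <= r 9%N := le_trans h8 (m 8%N).
  have g0 := @Gf_le2 t (r 0%N) h0.
  have f0 := @Gf_le1 t (r 0%N) T78.
  have g1 := @Gf_le2 t (r 1%N) h1.
  have f1 := @Gf_le1 t (r 1%N) T78.
  have g2 := @Gf_le2 t (r 2%N) h2.
  have f2 := @Gf_le1 t (r 2%N) T78.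
  have g3 := @Gf_le2 t (r 3%N) h3.
  have f3 := @Gf_le1 t (r 3%N) T78.
  have g4 := @Gf_le2 t (r 4%N) h4.
  have f4 := @Gf_le1 t (r 4%N) T78.
  have g5 := @Gf_le2 t (r 5%N) h5.
  have f5 := @Gf_le1 t (r 5%N) T78.
  have g6 := @Gf_le2 t (r 6%N) h6.
  have f6 := @Gf_le1 t (r 6%N) T78.
  have g7 := @Gf_0 t (r 7%N) h7.
  have f7 := @Gf_le1 t (r 7%N) T78.
  have g8 := @Gf_0 t (r 8%N) h8.
  have f8 := @Gf_le1 t (r 8%N) T78.
  have g9 := @Gf_0 t (r 9%N) h9.
  have f9 := @Gf_le1 t (r 9%N) T78.
  clear -t1 t2 tl c0 c1 c2 c3 m0 m1 m2 m3 m4 m5 m6 m7 m8 m9 r9' g0 f0 g1 f1 g2 f2 g3 f3 g4 f4 g5 f5 g6 f6 g7 f7 g8 f8 g9 f9.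
  lra. }
have [q5|q5] := lerP (r 5%N) (7/8).
{ have h5 : r 5%N <= 7/8 := q5.
  have h4 : r 4%N <= 7/8 := le_trans (m 4%N) h5.
  have h3 : r 3%N <= 7/8 := le_trans (m 3%N) h4.
  have h2 : r 2%N <= 7/8 := le_trans (m 2%N) h3.
  have h1 : r 1%N <= 7/8 := le_trans (m 1%N) h2.
  have h0 : r 0%N <= 7/8 := le_trans (m 0%N) h1.
  have h6 : 7/8 <= r 6%N := ltW q6.
  have h7 : 7/8 <= r 7%N := le_trans h6 (m 6%N).
  have h8 : 7/8 <= r 8%N := le_trans h7 (m 7%N).
  have h9 : 7/8 <= r 9%N := le_trans h8 (m 8%N).
  have g0 := @Gf_le2 t (r 0%N) h0.
  have f0 := @Gf_le1 t (r 0%N) T78.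
  have g1 := @Gf_le2 t (r 1%N) h1.
  have f1 := @Gf_le1 t (r 1%N) T78.
  have g2 := @Gf_le2 t (r 2%N) h2.
  have f2 := @Gf_le1 t (r 2%N) T78.
  have g3 := @Gf_le2 t (r 3%N) h3.
  have f3 := @Gf_le1 t (r 3%N) T78.
  have g4 := @Gf_le2 t (r 4%N) h4.
  have f4 := @Gf_le1 t (r 4%N) T78.
  have g5 := @Gf_le2 t (r 5%N) h5.
  have f5 := @Gf_le1 t (r 5%N) T78.
  have g6 := @Gf_0 t (r 6%N) h6.
  have f6 := @Gf_le1 t (r 6%N) T78.
  have g7 := @Gf_0 t (r 7%N) h7.
  have f7 := @Gf_le1 t (r 7%N) T78.
  have g8 := @Gf_0 t (r 8%N) h8.
  have f8 := @Gf_le1 t (r 8%N) T78.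
  have g9 := @Gf_0 t (r 9%N) h9.
  have f9 := @Gf_le1 t (r 9%N) T78.
  clear -t1 t2 tl c0 c1 c2 c3 m0 m1 m2 m3 m4 m5 m6 m7 m8 m9 r9' g0 f0 g1 f1 g2 f2 g3 f3 g4 f4 g5 f5 g6 f6 g7 f7 g8 f8 g9 f9.
  lra. }
have [q4|q4] := lerP (r 4%N) (7/8).
{ have h4 : r 4%N <= 7/8 := q4.
  have h3 : r 3%N <= 7/8 := le_trans (m 3%N) h4.
  have h2 : r 2%N <= 7/8 := le_trans (m 2%N) h3.
  have h1 : r 1%N <= 7/8 := le_trans (m 1%N) h2.
  have h0 : r 0%N <= 7/8 := le_trans (m 0%N) h1.
  have h5 : 7/8 <= r 5%N := ltW q5.
  have h6 : 7/8 <= r 6%N := le_trans h5 (m 5%N).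
  have h7 : 7/8 <= r 7%N := le_trans h6 (m 6%N).
  have h8 : 7/8 <= r 8%N := le_trans h7 (m 7%N).
  have h9 : 7/8 <= r 9%N := le_trans h8 (m 8%N).
  have g0 := @Gf_le2 t (r 0%N) h0.
  have f0 := @Gf_le1 t (r 0%N) T78.
  have g1 := @Gf_le2 t (r 1%N) h1.
  have f1 := @Gf_le1 t (r 1%N) T78.
  have g2 := @Gf_le2 t (r 2%N) h2.
  have f2 := @Gf_le1 t (r 2%N) T78.
  have g3 := @Gf_le2 t (r 3%N) h3.
  have f3 := @Gf_le1 t (r 3%N) T78.
  have g4 := @Gf_le2 t (r 4%N) h4.
  have f4 := @Gf_le1 t (r 4%N) T78.
  have g5 := @Gf_0 t (r 5%N) h5.
  have f5 := @Gf_le1 t (r 5%N) T78.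
  have g6 := @Gf_0 t (r 6%N) h6.
  have f6 := @Gf_le1 t (r 6%N) T78.
  have g7 := @Gf_0 t (r 7%N) h7.
  have f7 := @Gf_le1 t (r 7%N) T78.
  have g8 := @Gf_0 t (r 8%N) h8.
  have f8 := @Gf_le1 t (r 8%N) T78.
  have g9 := @Gf_0 t (r 9%N) h9.
  have f9 := @Gf_le1 t (r 9%N) T78.
  clear -t1 t2 tl c0 c1 c2 c3 m0 m1 m2 m3 m4 m5 m6 m7 m8 m9 r9' g0 f0 g1 f1 g2 f2 g3 f3 g4 f4 g5 f5 g6 f6 g7 f7 g8 f8 g9 f9.
  lra. }
have [q3|q3] := lerP (r 3%N) (7/8).
{ have h3 : r 3%N <= 7/8 := q3.
  have h2 : r 2%N <= 7/8 := le_trans (m 2%N) h3.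
  have h1 : r 1%N <= 7/8 := le_trans (m 1%N) h2.
  have h0 : r 0%N <= 7/8 := le_trans (m 0%N) h1.
  have h4 : 7/8 <= r 4%N := ltW q4.
  have h5 : 7/8 <= r 5%N := le_trans h4 (m 4%N).
  have h6 : 7/8 <= r 6%N := le_trans h5 (m 5%N).
  have h7 : 7/8 <= r 7%N := le_trans h6 (m 6%N).
  have h8 : 7/8 <= r 8%N := le_trans h7 (m 7%N).
  have h9 : 7/8 <= r 9%N := le_trans h8 (m 8%N).
  have g0 := @Gf_le2 t (r 0%N) h0.
  have f0 := @Gf_le1 t (r 0%N) T78.
  have g1 := @Gf_le2 t (r 1%N) h1.
  have f1 := @Gf_le1 t (r 1%N) T78.
  have g2 := @Gf_le2 t (r 2%N) h2.
  have f2 := @Gf_le1 t (r 2%N) T78.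
  have g3 := @Gf_le2 t (r 3%N) h3.
  have f3 := @Gf_le1 t (r 3%N) T78.
  have g4 := @Gf_0 t (r 4%N) h4.
  have f4 := @Gf_le1 t (r 4%N) T78.
  have g5 := @Gf_0 t (r 5%N) h5.
  have f5 := @Gf_le1 t (r 5%N) T78.
  have g6 := @Gf_0 t (r 6%N) h6.
  have f6 := @Gf_le1 t (r 6%N) T78.
  have g7 := @Gf_0 t (r 7%N) h7.
  have f7 := @Gf_le1 t (r 7%N) T78.
  have g8 := @Gf_0 t (r 8%N) h8.
  have f8 := @Gf_le1 t (r 8%N) T78.
  have g9 := @Gf_0 t (r 9%N) h9.
  have f9 := @Gf_le1 t (r 9%N) T78.
  clear -t1 t2 tl c0 c1 c2 c3 m0 m1 m2 m3 m4 m5 m6 m7 m8 m9 r9' g0 f0 g1 f1 g2 f2 g3 f3 g4 f4 g5 f5 g6 f6 g7 f7 g8 f8 g9 f9.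
  lra. }
have [q2|q2] := lerP (r 2%N) (7/8).
{ have h2 : r 2%N <= 7/8 := q2.
  have h1 : r 1%N <= 7/8 := le_trans (m 1%N) h2.
  have h0 : r 0%N <= 7/8 := le_trans (m 0%N) h1.
  have h3 : 7/8 <= r 3%N := ltW q3.
  have h4 : 7/8 <= r 4%N := le_trans h3 (m 3%N).
  have h5 : 7/8 <= r 5%N := le_trans h4 (m 4%N).
  have h6 : 7/8 <= r 6%N := le_trans h5 (m 5%N).
  have h7 : 7/8 <= r 7%N := le_trans h6 (m 6%N).
  have h8 : 7/8 <= r 8%N := le_trans h7 (m 7%N).
  have h9 : 7/8 <= r 9%N := le_trans h8 (m 8%N).
  have g0 := @Gf_le2 t (r 0%N) h0.
  have f0 := @Gf_le1 t (r 0%N) T78.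
  have g1 := @Gf_le2 t (r 1%N) h1.
  have f1 := @Gf_le1 t (r 1%N) T78.
  have g2 := @Gf_le2 t (r 2%N) h2.
  have f2 := @Gf_le1 t (r 2%N) T78.
  have g3 := @Gf_0 t (r 3%N) h3.
  have f3 := @Gf_le1 t (r 3%N) T78.
  have g4 := @Gf_0 t (r 4%N) h4.
  have f4 := @Gf_le1 t (r 4%N) T78.
  have g5 := @Gf_0 t (r 5%N) h5.
  have f5 := @Gf_le1 t (r 5%N) T78.
  have g6 := @Gf_0 t (r 6%N) h6.
  have f6 := @Gf_le1 t (r 6%N) T78.
  have g7 := @Gf_0 t (r 7%N) h7.
  have f7 := @Gf_le1 t (r 7%N) T78.
  have g8 := @Gf_0 t (r 8%N) h8.
  have f8 := @Gf_le1 t (r 8%N) T78.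
  have g9 := @Gf_0 t (r 9%N) h9.
  have f9 := @Gf_le1 t (r 9%N) T78.
  clear -t1 t2 tl c0 c1 c2 c3 m0 m1 m2 m3 m4 m5 m6 m7 m8 m9 r9' g0 f0 g1 f1 g2 f2 g3 f3 g4 f4 g5 f5 g6 f6 g7 f7 g8 f8 g9 f9.
  lra. }
have [q1|q1] := lerP (r 1%N) (7/8).
{ have h1 : r 1%N <= 7/8 := q1.
  have h0 : r 0%N <= 7/8 := le_trans (m 0%N) h1.
  have h2 : 7/8 <= r 2%N := ltW q2.
  have h3 : 7/8 <= r 3%N := le_trans h2 (m 2%N).
  have h4 : 7/8 <= r 4%N := le_trans h3 (m 3%N).
  have h5 : 7/8 <= r 5%N := le_trans h4 (m 4%N).
  have h6 : 7/8 <= r 6%N := le_trans h5 (m 5%N).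
  have h7 : 7/8 <= r 7%N := le_trans h6 (m 6%N).
  have h8 : 7/8 <= r 8%N := le_trans h7 (m 7%N).
  have h9 : 7/8 <= r 9%N := le_trans h8 (m 8%N).
  have g0 := @Gf_le2 t (r 0%N) h0.
  have f0 := @Gf_le1 t (r 0%N) T78.
  have g1 := @Gf_le2 t (r 1%N) h1.
  have f1 := @Gf_le1 t (r 1%N) T78.
  have g2 := @Gf_0 t (r 2%N) h2.
  have f2 := @Gf_le1 t (r 2%N) T78.
  have g3 := @Gf_0 t (r 3%N) h3.
  have f3 := @Gf_le1 t (r 3%N) T78.
  have g4 := @Gf_0 t (r 4%N) h4.
  have f4 := @Gf_le1 t (r 4%N) T78.
  have g5 := @Gf_0 t (r 5%N) h5.
  have f5 := @Gf_le1 t (r 5%N) T78.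
  have g6 := @Gf_0 t (r 6%N) h6.
  have f6 := @Gf_le1 t (r 6%N) T78.
  have g7 := @Gf_0 t (r 7%N) h7.
  have f7 := @Gf_le1 t (r 7%N) T78.
  have g8 := @Gf_0 t (r 8%N) h8.
  have f8 := @Gf_le1 t (r 8%N) T78.
  have g9 := @Gf_0 t (r 9%N) h9.
  have f9 := @Gf_le1 t (r 9%N) T78.
  clear -t1 t2 tl c0 c1 c2 c3 m0 m1 m2 m3 m4 m5 m6 m7 m8 m9 r9' g0 f0 g1 f1 g2 f2 g3 f3 g4 f4 g5 f5 g6 f6 g7 f7 g8 f8 g9 f9.
  lra. }
have [q0|q0] := lerP (r 0%N) (7/8).
{ have h0 : r 0%N <= 7/8 := q0.
  have h1 : 7/8 <= r 1%N := ltW q1.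
  have h2 : 7/8 <= r 2%N := le_trans h1 (m 1%N).
  have h3 : 7/8 <= r 3%N := le_trans h2 (m 2%N).
  have h4 : 7/8 <= r 4%N := le_trans h3 (m 3%N).
  have h5 : 7/8 <= r 5%N := le_trans h4 (m 4%N).
  have h6 : 7/8 <= r 6%N := le_trans h5 (m 5%N).
  have h7 : 7/8 <= r 7%N := le_trans h6 (m 6%N).
  have h8 : 7/8 <= r 8%N := le_trans h7 (m 7%N).
  have h9 : 7/8 <= r 9%N := le_trans h8 (m 8%N).
  have g0 := @Gf_le2 t (r 0%N) h0.
  have f0 := @Gf_le1 t (r 0%N) T78.
  have g1 := @Gf_0 t (r 1%N) h1.
  have f1 := @Gf_le1 t (r 1%N) T78.
  have g2 := @Gf_0 t (r 2%N) h2.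
  have f2 := @Gf_le1 t (r 2%N) T78.
  have g3 := @Gf_0 t (r 3%N) h3.
  have f3 := @Gf_le1 t (r 3%N) T78.
  have g4 := @Gf_0 t (r 4%N) h4.
  have f4 := @Gf_le1 t (r 4%N) T78.
  have g5 := @Gf_0 t (r 5%N) h5.
  have f5 := @Gf_le1 t (r 5%N) T78.
  have g6 := @Gf_0 t (r 6%N) h6.
  have f6 := @Gf_le1 t (r 6%N) T78.
  have g7 := @Gf_0 t (r 7%N) h7.
  have f7 := @Gf_le1 t (r 7%N) T78.
  have g8 := @Gf_0 t (r 8%N) h8.
  have f8 := @Gf_le1 t (r 8%N) T78.
  have g9 := @Gf_0 t (r 9%N) h9.
  have f9 := @Gf_le1 t (r 9%N) T78.
  clear -t1 t2 tl c0 c1 c2 c3 m0 m1 m2 m3 m4 m5 m6 m7 m8 m9 r9' g0 f0 g1 f1 g2 f2 g3 f3 g4 f4 g5 f5 g6 f6 g7 f7 g8 f8 g9 f9.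
  lra. }
{ have h0 : 7/8 <= r 0%N := ltW q0.
  have h1 : 7/8 <= r 1%N := le_trans h0 (m 0%N).
  have h2 : 7/8 <= r 2%N := le_trans h1 (m 1%N).
  have h3 : 7/8 <= r 3%N := le_trans h2 (m 2%N).
  have h4 : 7/8 <= r 4%N := le_trans h3 (m 3%N).
  have h5 : 7/8 <= r 5%N := le_trans h4 (m 4%N).
  have h6 : 7/8 <= r 6%N := le_trans h5 (m 5%N).
  have h7 : 7/8 <= r 7%N := le_trans h6 (m 6%N).
  have h8 : 7/8 <= r 8%N := le_trans h7 (m 7%N).
  have h9 : 7/8 <= r 9%N := le_trans h8 (m 8%N).
  have g0 := @Gf_0 t (r 0%N) h0.
  have f0 := @Gf_le1 t (r 0%N) T78.
  have g1 := @Gf_0 t (r 1%N) h1.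
  have f1 := @Gf_le1 t (r 1%N) T78.
  have g2 := @Gf_0 t (r 2%N) h2.
  have f2 := @Gf_le1 t (r 2%N) T78.
  have g3 := @Gf_0 t (r 3%N) h3.
  have f3 := @Gf_le1 t (r 3%N) T78.
  have g4 := @Gf_0 t (r 4%N) h4.
  have f4 := @Gf_le1 t (r 4%N) T78.
  have g5 := @Gf_0 t (r 5%N) h5.
  have f5 := @Gf_le1 t (r 5%N) T78.
  have g6 := @Gf_0 t (r 6%N) h6.
  have f6 := @Gf_le1 t (r 6%N) T78.
  have g7 := @Gf_0 t (r 7%N) h7.
  have f7 := @Gf_le1 t (r 7%N) T78.
  have g8 := @Gf_0 t (r 8%N) h8.
  have f8 := @Gf_le1 t (r 8%N) T78.
  have g9 := @Gf_0 t (r 9%N) h9.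
  have f9 := @Gf_le1 t (r 9%N) T78.
  clear -t1 t2 tl c0 c1 c2 c3 m0 m1 m2 m3 m4 m5 m6 m7 m8 m9 r9' g0 f0 g1 f1 g2 f2 g3 f3 g4 f4 g5 f5 g6 f6 g7 f7 g8 f8 g9 f9.
  lra. }
Qed.

Lemma Gf_ge0 T z : 0 <= Gf T z.
Proof. by rewrite /Gf le_max lexx. Qed.

Lemma y_chain (y : nat -> R) : (forall j, y j.+1 <= y j) ->
  forall i j, (i <= j)%N -> y j <= y i.
Proof.
move=> m i j /subnKC <-; elim: (j - i)%N => [|n IH]; first by rewrite addn0.
by rewrite addnS; apply: le_trans IH; exact: m.
Qed.

Lemma pig3 (t : R) (y : nat -> R) (sd : nat -> bool) :
  (forall j, y j.+1 <= y j) -> (forall j, 0 <= y j) ->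
  (forall b, \sum_(0 <= j < 3) (if sd j == b then y j else 0) <= t) ->
  y 1%N + y 2%N <= t.
Proof.
move=> m p B; have := B true; have := B false.
rewrite /index_iota /= !big_cons !big_nil.
have := m 0%N; have := m 1%N; have := p 2%N.
by case: (sd 0%N); case: (sd 1%N); case: (sd 2%N) => /=; lra.
Qed.

Lemma pig5 (t : R) (y : nat -> R) (sd : nat -> bool) :
  (forall j, y j.+1 <= y j) -> (forall j, 0 <= y j) ->
  (forall b, \sum_(0 <= j < 5) (if sd j == b then y j else 0) <= t) ->
  y 2%N + y 3%N + y 4%N <= t.
Proof.
move=> m p B; have := B true; have := B false.
rewrite /index_iota /= !big_cons !big_nil.
have := m 0%N; have := m 1%N; have := m 2%N; have := m 3%N; have := p 4%N.
by case: (sd 0%N); case: (sd 1%N); case: (sd 2%N); case: (sd 3%N); case: (sd 4%N) => /=; lra.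
Qed.

Lemma pigc (t : R) (y : nat -> R) (sd : nat -> bool) n m :
  (forall j, y j.+1 <= y j) -> (forall j, 0 <= y j) ->
  (forall b, \sum_(0 <= j < n.+1) (if sd j == b then y j else 0) <= t) ->
  (m.*2 <= n.+2)%N -> m%:R * y n <= t.
Proof.
move=> mo p B hm.
pose cnt b := (\sum_(0 <= j < n.+1) (sd j == b))%N.
have hc : (cnt true + cnt false = n.+1)%N.
  rewrite /cnt -big_split /=.
  rewrite (eq_bigr (fun _ => 1%N)); last by move=> j _; case: (sd j).
  by rewrite sum_nat_const_nat subn0 muln1.
have hb b : (cnt b)%:R * y n <= t.
  apply: le_trans (B b).
  rewrite /cnt natr_sum big_distrl /=.
  rewrite !big_nat; apply: ler_sum => j /andP[_ hj].
  case: (sd j == b) => /=; last by rewrite mul0r.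
  by rewrite mul1r; apply: y_chain.
have [b hb'] : exists b, (m <= cnt b)%N.
  case: (leqP m (cnt true)) => h1; first by exists true.
  exists false; move: h1 hm hc; rewrite -addnn; lia.
apply: le_trans (hb b); apply: ler_wpM2r; first exact: p.
by rewrite ler_nat.
Qed.

Lemma abel (F : nat -> R) K :
  F 0%N + \sum_(0 <= n < K) (F n.+1 - F n) / n.+2%:R =
  \sum_(0 <= n < K) F n / (n.+1 * n.+2)%:R + F K / K.+1%:R.
Proof.
elim: K => [|K IH]; first by rewrite /index_iota /= !big_nil addr0 add0r divr1.
rewrite !big_nat_recr //= addrA IH.
have h1 : K.+1%:R != 0 :> R by rewrite pnatr_eq0.
have h2 : K.+2%:R != 0 :> R by rewrite pnatr_eq0.
rewrite natrM -addn1 natrD.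
by field; rewrite natr1 nat1r !pnatr_eq0.
Qed.

Lemma trunc (f : nat -> R) K N :
  (forall n, 0 <= f n) -> (forall n, (N <= n)%N -> f n = 0) ->
  \sum_(0 <= n < K) f n <= \sum_(0 <= n < N) f n.
Proof.
move=> f0 fN.
case: (leqP K N) => h.
  rewrite [X in _ <= X](@big_cat_nat _ _ _ K) //= lerDl.
  by apply: sumr_ge0 => i _.
rewrite [X in X <= _](@big_cat_nat _ _ _ N) //= ?(ltnW h) // [X in _ + X]big1_seq ?addr0 //.
by move=> i /andP[_]; rewrite mem_index_iota => /andP[hi _]; exact: fN.
Qed.
End K.
Section Comb.
Variable k : nat.
Local Open Scope nat_scope.
Definition pos (p : {perm 'I_k}) (i : 'I_k) : nat := (p^-1)%g i.

Lemma pos_inj p : injective (pos p).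
Proof. by move=> i j /val_inj/perm_inj. Qed.

Lemma posM p (y z : 'I_k) i : pos (p * tperm y z)%g i = pos p (tperm y z i).
Proof. by rewrite /pos invMg permM tpermV. Qed.

Definition Ex (s : seq 'I_k) (a : 'I_k) :=
  [set p : {perm 'I_k} | ~~ has (fun y => pos p a < pos p y) s].

Lemma card_Ex s a b : a \in s -> b \in s -> #|Ex s a| = #|Ex s b|.
Proof.
move=> as_ bs.
have -> : Ex s a = (fun p => p * tperm a b)%g @^-1: Ex s b.
  apply/setP => p; rewrite !inE.
  congr negb.
  transitivity (has (fun y => pos p a < pos p y) (map (tperm a b) s)); last first.
    by rewrite has_map; apply: eq_has => y; rewrite /= !posM tpermR.
  apply: eq_has_r => z.
  have hz : (z \in map (tperm a b) s) = (tperm a b z \in s).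
    by rewrite -{1}(tpermK a b z) mem_map //; exact: perm_inj.
  by rewrite hz; case: tpermP => [->|->|//]; rewrite ?as_ ?bs.
by rewrite card_preimset //; exact: mulIg.
Qed.

Lemma Ex_partition s p : uniq s -> s != [::] ->
  \sum_(a <- s) (p \in Ex s a) = 1.
Proof.
case: s => [//|a0 s0] us _.
set s := a0 :: s0.
have [a1 a1s a1max] := @arg_maxnP _ a0 (fun i => i \in s) (pos p) (mem_head _ _).
rewrite big_seq_cond (eq_bigr (fun i => (i == a1) : nat)); last first.
  move=> i /andP[iS _]; rewrite inE; congr nat_of_bool.
  apply/idP/idP.
    move=> /hasPn h; apply/eqP; apply: (@pos_inj p); apply/eqP; rewrite eqn_leq.
    have h1 : pos p i <= pos p a1 := a1max i iS.
    have h2 := h a1 a1s; rewrite -leqNgt in h2.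
    by rewrite h1 h2.
  move=> /eqP ->; apply/hasPn => z zs; rewrite -leqNgt; exact: (a1max z zs).
rewrite -big_seq_cond.
have -> : \sum_(i <- s) (i == a1 : nat) = \sum_(i <- s | i == a1) 1%N.
  by rewrite [RHS]big_mkcond; apply: eq_bigr => i _; case: (i == a1).
rewrite sum1_count.
by rewrite (count_uniq_mem _ us) a1s.
Qed.

Lemma card_perm_ord : #|{perm 'I_k}| = k`!.
Proof. exact: card_Sn. Qed.

Lemma sum_in (A : {set {perm 'I_k}}) : \sum_p (p \in A : nat) = #|A|.
Proof.
rewrite -sum1_card [RHS]big_mkcond; apply: eq_bigr => p _; by case: (p \in A).
Qed.

Lemma count_last (c : 'I_k) (B : seq 'I_k) : uniq B -> c \notin B ->
  #|[set p : {perm 'I_k} | ~~ has (fun b => pos p c < pos p b) B]| * (size B).+1 = k`!.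
Proof.
move=> uB cB.
have us : uniq (c :: B) by rewrite /= cB uB.
have -> : [set p : {perm 'I_k} | ~~ has (fun b => pos p c < pos p b) B] = Ex (c :: B) c.
  by apply/setP => p; rewrite !inE /= ltnn.
have H : \sum_(a <- c :: B) #|Ex (c :: B) a| = k`!.
  rewrite -card_perm_ord -sum1_card.
  rewrite [RHS](eq_bigr (fun p => \sum_(a <- c :: B) (p \in Ex (c :: B) a))); last first.
    by move=> p _; rewrite Ex_partition.
  rewrite [RHS]exchange_big /=.
  apply: eq_bigr => a _; by rewrite -sum_in.
rewrite -H (eq_big_seq (fun _ => #|Ex (c :: B) c|)); last first.
  by move=> a aS; rewrite (card_Ex aS (mem_head _ _)).
by rewrite big_const_seq count_predT iter_addn_0 mulnC.
Qed.
End Comb.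
Section M.
Variable R : realType.
Local Open Scope classical_set_scope.
Lemma lm_mono (A B : set R) : A `<=` B -> ((@lebesgue_measure R) A <= (@lebesgue_measure R) B)%E.
Proof.
move=> AB; rewrite /lebesgue_measure /lebesgue_stieltjes_measure /measure_extension.
exact: le_mu_ext.
Qed.

Lemma meas2 (a T M b : R) (A : set R) : a <= T ->
  A `<=` `]a, T] `|` `]M, b[ ->
  ((@lebesgue_measure R) A <= ((T - a) + Num.max 0 (b - M))%:E)%E.
Proof.
move=> aT AB.
have h1 := @lm_mono A _ AB.
have h2 : ((@lebesgue_measure R) (`]a, T] `|` `]M, b[) <= (@lebesgue_measure R) `]a, T] + (@lebesgue_measure R) `]M, b[)%E := @measureU2 _ _ _ (@lebesgue_measure R) `]a, T] `]M, b[ (measurable_itv _) (measurable_itv _).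
apply: (le_trans h1); apply: (le_trans h2).
have e1 := lebesgue_measure_itv `]a, T]%R.
have e2 := lebesgue_measure_itv `]M, b[%R.
rewrite /= in e1 e2. rewrite e1 e2 !lte_fin.
rewrite EFinD; apply: leeD.
  case: ifP => _; first by [].
  by rewrite lee_fin subr_ge0.
case: ifP => h; rewrite lee_fin ?le_max ?lexx ?orbT //.
Qed.
End M.
Section Part3.
Variable R : realType.
Variables (V E : finType) (k : nat) (ends : E -> {set V}) (lab : E -> 'I_k).
Variables (x : V -> 'I_k -> R) (xe : E -> R) (e : E) (d : V -> 'I_k) (u v : V).
Hypothesis huv : ends e = [set u; v].
Hypothesis hfeas : minecc_feasible ends lab x xe.
Hypothesis hxe : forall w, w \in ends e -> x w (lab e) <= xe e.

Local Notation c := (lab e).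
Local Notation t := (xe e).

Definition sv i := Num.min (x u i) (x v i).
Definition leS := fun i j => sv i <= sv j.
Definition lst := sort leS [seq i <- enum 'I_k | i != c].
Definition rr n := if (n < size lst)%N then sv (nth c lst n) else 1.
Definition JJ (p : {perm 'I_k}) := find (fun i => (pos p c < pos p i)%N) lst.

Lemma x01 w i : 0 <= x w i <= 1.
Proof. by case: hfeas => _ [_ [h _]]; exact: h. Qed.

Lemma sv_u i : sv i <= x u i. Proof. by rewrite /sv ge_min lexx. Qed.
Lemma sv_v i : sv i <= x v i. Proof. by rewrite /sv ge_min lexx orbT. Qed.
Lemma sv_le1 i : sv i <= 1.
Proof. by apply: le_trans (sv_u i) _; case/andP: (x01 u i). Qed.

Lemma lst_sorted : sorted leS lst.
Proof. by apply: sort_sorted => i j; rewrite /leS le_total. Qed.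

Lemma mem_lst i : (i \in lst) = (i != c).
Proof. by rewrite /lst mem_sort mem_filter mem_enum andbT. Qed.

Lemma uniq_lst : uniq lst.
Proof. by rewrite /lst sort_uniq filter_uniq // enum_uniq. Qed.

Lemma rr_le1 n : rr n <= 1.
Proof. by rewrite /rr; case: ifP => _ //; exact: sv_le1. Qed.

Lemma rr_sorted i j : (i <= j)%N -> (j < size lst)%N -> rr i <= rr j.
Proof.
move=> hij hj; have hi := leq_ltn_trans hij hj.
rewrite /rr hi hj.
have tr : transitive leS by move=> a b cc; rewrite /leS; exact: le_trans.
have rf : reflexive leS by move=> a; rewrite /leS.
exact: (sorted_leq_nth tr rf c lst_sorted).
Qed.

Lemma rr_mono j : rr j <= rr j.+1.
Proof.
case: (ltnP j.+1 (size lst)) => h; first exact: rr_sorted.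
rewrite {2}/rr ltnNge h /=; exact: rr_le1.
Qed.

Lemma color_c w (rho : R) (p : {perm 'I_k}) :
  x w c < rho ->
  (forall j : 'I_k, ((invg p) c < j)%N -> ~~ (x w (p j) < rho)) ->
  gcr_color x d rho p w = c.
Proof.
move=> hw H; rewrite /gcr_color; case: pickP => [j /andP[hj /forallP hall] | none].
  have [lt|gt|eq] := ltngtP ((invg p) c) j.
  - by move: (H j lt); rewrite hj.
  - have := hall ((invg p) c); rewrite gt /= permKV.
    by rewrite hw.
  - have -> : j = (invg p) c by apply: val_inj.
    by rewrite permKV.
have := none ((invg p) c); rewrite /= permKV hw /=.
case/negP; apply/forallP => j'; apply/implyP; exact: H.
Qed.

Lemma mist_r (rho : R) p : t < rho -> gcr_mistake ends lab x d rho p e -> rr (JJ p) < rho.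
Proof.
move=> trho [w wE hw]; rewrite ltNge; apply/negP => hr.
move/negP: hw; apply; apply/eqP.
apply: color_c; first exact: le_lt_trans (hxe wE) trho.
move=> j hj; rewrite -leNgt.
set i := p j.
have ic : i != c.
  by apply/eqP => ic; move: hj; rewrite -ic /i permK ltnn.
have il : i \in lst by rewrite mem_lst.
have ai : (pos p c < pos p i)%N by rewrite /pos /i permK.
have hidx : (index i lst < size lst)%N by rewrite index_mem.
have hJ : (JJ p <= index i lst)%N.
  rewrite leqNgt; apply/negP => h; have := before_find c h.
  by rewrite nth_index // ai.
have h1 : rr (JJ p) <= sv i.
  have := rr_sorted hJ hidx; rewrite {2}/rr hidx nth_index //.
have h2 : sv i <= x w i.
  move: wE; rewrite huv !inE => /orP[] /eqP ->; [exact: sv_u | exact: sv_v].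
by apply: le_trans hr _; apply: le_trans h1 h2.
Qed.


Local Notation T := (Num.max (1/2) t).

Lemma meas_p p :
  ((@lebesgue_measure R) [set rho : R | (1/2 < rho < 7/8)%R /\ gcr_mistake ends lab x d rho p e]%classic
    <= ((T - 1/2) + Gf T (rr (JJ p)))%:E)%E.
Proof.
apply: meas2; first by rewrite le_max lexx.
move=> rho /= [/andP[h1 h2] hm].
case: (lerP rho T) => hT.
  by left; rewrite /= in_itv /= h1 hT.
right; rewrite /= in_itv /= h2 andbT gt_max hT /=.
apply: mist_r hm; apply: le_lt_trans hT; by rewrite le_max lexx orbT.
Qed.

Definition side j := (x u (nth c lst j) <= x v (nth c lst j)).

Lemma sum_out w : \sum_(i | i != c) (1 - x w i) = x w c.
Proof.
have h : \sum_i (1 - x w i) = 1.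
  rewrite sumrB sumr_const card_ord.
  case: hfeas => hs _; rewrite hs; lra.
rewrite (bigD1 c) //= in h; lra.
Qed.

Lemma budget (b : bool) N :
  \sum_(0 <= j < N) (if side j == b then 1 - rr j else 0) <= t.
Proof.
apply: (le_trans (@trunc _ (fun j => if side j == b then 1 - rr j else 0) N (size lst) _ _)).
- by move=> n; case: ifP => _ //; rewrite subr_ge0 rr_le1.
- by move=> n hn; rewrite /rr ltnNge hn /= subrr; case: ifP.
pose g i := if (x u i <= x v i) == b then 1 - sv i else 0.
have -> : \sum_(0 <= j < size lst) (if side j == b then 1 - rr j else 0)
    = \sum_(i <- lst) g i.
  rewrite (big_nth c); apply: eq_big_nat => j /andP[_ hj].
  by rewrite /g /side /rr hj.
have pl : perm_eq lst [seq i <- enum 'I_k | i != c] by rewrite /lst perm_sort perm_refl.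
rewrite (perm_big _ pl) big_filter.
pose w := if b then u else v.
have wE : w \in ends e by rewrite huv !inE /w; case: ifP => _; rewrite eqxx ?orbT.
apply: le_trans (hxe wE); rewrite -sum_out.
rewrite big_enum_cond /=.
apply: ler_sum => i _.
rewrite /g /w /sv; clear g wE w; case: b; case: ifP => hs.
- by move/eqP: hs => hs; rewrite min_l.
- by rewrite subr_ge0; case/andP: (x01 u i).
- move/eqP: hs => /negbT; rewrite -ltNge => hs; by rewrite min_r // ltW.
- by rewrite subr_ge0; case/andP: (x01 v i).
Qed.


Lemma ym j : 1 - rr j.+1 <= 1 - rr j.
Proof. by rewrite lerD2l lerN2 rr_mono. Qed.

Lemma yp j : 0 <= 1 - rr j.
Proof. by rewrite subr_ge0 rr_le1. Qed.

Lemma C0 : 1 - t <= rr 0%N.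
Proof.
have := budget (side 0%N) 1.
rewrite /index_iota /= big_cons big_nil eqxx addr0; lra.
Qed.

Lemma C1 : (1 - rr 1%N) + (1 - rr 2%N) <= t.
Proof. exact: (@pig3 _ t (fun j => 1 - rr j) side ym yp (fun b => budget b 3)). Qed.

Lemma C2 : (1 - rr 2%N) + (1 - rr 3%N) + (1 - rr 4%N) <= t.
Proof. exact: (@pig5 _ t (fun j => 1 - rr j) side ym yp (fun b => budget b 5)). Qed.

Lemma C3 : 4 * (1 - rr 6%N) <= t.
Proof. exact: (@pigc _ t (fun j => 1 - rr j) side 6 4 ym yp (fun b => budget b 7)). Qed.

Lemma C4 : 6 * (1 - rr 10%N) <= t.
Proof. exact: (@pigc _ t (fun j => 1 - rr j) side 10 6 ym yp (fun b => budget b 11)). Qed.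

Lemma rr_ge i j : (i <= j)%N -> rr i <= rr j.
Proof.
move=> h; have := @y_chain _ (fun j => 1 - rr j) ym i j h; rewrite /=; lra.
Qed.

Lemma sum_const_perm (a : R) : \sum_(p : {perm 'I_k}) a = k`!%:R * a.
Proof. by rewrite sumr_const card_perm_ord mulr_natl. Qed.

Lemma sum_if_perm (P : pred {perm 'I_k}) (a : R) :
  \sum_(p : {perm 'I_k}) (if P p then a else 0) = #|[set p | P p]|%:R * a.
Proof.
rewrite -big_mkcond /= (eq_bigl (fun p => p \in [set p | P p])); last by move=> p; rewrite inE.
by rewrite sumr_const mulr_natl.
Qed.

Lemma cnt_J n : (n < size lst)%N ->
  #|[set p : {perm 'I_k} | (n < JJ p)%N]|%:R = k`!%:R / n.+2%:R :> R.
Proof.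
move=> hn.
have hn' : (n.+1 <= size lst)%N by [].
have -> : [set p : {perm 'I_k} | (n < JJ p)%N] =
    [set p : {perm 'I_k} | ~~ has (fun b => (pos p c < pos p b)%N) (take n.+1 lst)].
  by apply/setP => p; rewrite !inE has_take_leq // -leqNgt.
have := count_last (take_uniq n.+1 uniq_lst) (_ : c \notin take n.+1 lst).
rewrite size_takel // => H.
  set S := #|_|; rewrite -H.
  have -> : ((S * n.+2)%N%:R : R) = S%:R * n.+2%:R by rewrite natrM.
  rewrite mulfK //; by rewrite pnatr_eq0.
apply/negP => /mem_take; by rewrite mem_lst eqxx.
Qed.

Lemma telesc (F : nat -> R) (J K : nat) : (J <= K)%N ->
  F J = F 0%N + \sum_(0 <= n < K) (if (n < J)%N then F n.+1 - F n else 0).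
Proof.
move=> hJ.
rewrite (@big_cat_nat _ _ _ J) //= [X in _ + (_ + X)]big1_seq; last first.
  by move=> i /andP[_]; rewrite mem_index_iota => /andP[hi _]; rewrite ltnNge hi.
rewrite addr0 (eq_big_nat _ _ (F2 := fun n => F n.+1 - F n)); last first.
  by move=> i /andP[_ hi]; rewrite hi.
rewrite telescope_sumr //; lra.
Qed.

Lemma sumF :
  \sum_(p : {perm 'I_k}) Gf T (rr (JJ p)) =
  k`!%:R * \sum_(0 <= n < size lst) Gf T (rr n) / (n.+1 * n.+2)%:R.
Proof.
pose F n := Gf T (rr n).
have FK : F (size lst) = 0.
  apply/le_anti; rewrite Gf_ge0 andbT /F; apply: Gf_0.
  by rewrite /rr ltnn; lra.
rewrite (eq_bigr (fun p => F 0%N + \sum_(0 <= n < size lst)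
     (if (n < JJ p)%N then F n.+1 - F n else 0))); last first.
  by move=> p _; rewrite -/(F _) -telesc // find_size.
rewrite big_split /= sum_const_perm exchange_big /=.
rewrite (eq_big_nat _ _ (F2 := fun n => (k`!%:R / n.+2%:R) * (F n.+1 - F n))); last first.
  move=> n /andP[_ hn].
  by rewrite (sum_if_perm (fun p => (n < JJ p)%N)) cnt_J.
have := abel F (size lst); rewrite FK mul0r addr0 => <-.
rewrite mulrDr big_distrr /=; congr (_ + _); apply: eq_bigr => n _.
rewrite /F; field.
by apply/negP => /eqP; have := ler0n R n; lra.
Qed.


Lemma sum_le : 1/8 < t -> t < 3/4 ->
  \sum_(0 <= n < size lst) Gf T (rr n) / (n.+1 * n.+2)%:R <= t/2 - (T - 1/2).
Proof.
move=> t1 t2.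
apply: le_trans (@key _ t rr t1 t2 rr_mono rr_le1 C0 C1 C2 C3).
apply: trunc.
  by move=> n; apply: divr_ge0; [exact: Gf_ge0 | exact: ler0n].
move=> n hn.
have h10 : 7/8 <= rr n.
  have := rr_ge hn; have := C4; lra.
have := Gf_0 T h10; have := Gf_ge0 T (rr n) => ha hb.
have hz : Gf T (rr n) = 0 by apply/le_anti; rewrite hb ha.
by rewrite hz mul0r.
Qed.

Lemma part3_main : 1/8 < t -> t < 3/4 ->
  (gcr_prob_mistake ends lab (1/2) (7/8) x d e <= ((4/3) * t)%:E)%E.
Proof.
move=> t1 t2; rewrite /gcr_prob_mistake.
apply: le_trans.
  apply: lee_wpmul2r; first by rewrite lee_fin invr_ge0 mulr_ge0 // ?ler0n //; lra.
  apply: le_trans; first (apply: lee_sum => p _; exact: meas_p).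
  by rewrite sumEFin.
rewrite -EFinM lee_fin big_split /= sum_const_perm sumF card_perm_ord.
have hs := sum_le t1 t2.
set S0 := \sum_(0 <= n < size lst) _ in hs *.
set K := k`!%:R.
have K0 : 0 < K by rewrite /K ltr0n fact_gt0.
have hT1 : 1/2 <= T by rewrite le_max lexx.
rewrite ler_pdivrMr; last by apply: mulr_gt0 => //; lra.
have : K * (T - 1/2) + K * S0 <= K * (t / 2).
  by rewrite -mulrDr ler_wpM2l ?(ltW K0) //; lra.
lra.
Qed.

End Part3.

Lemma A_le (R : realType) q w chi : (1 <= q <= 6)%N -> A_feasible (R:=R) q w chi -> A_obj q w chi <= 1/2.
Proof.
case: q => [|[|[|[|[|[|[|q]]]]]]] // _;
rewrite /A_feasible /A_obj => -[m [h1 [h2 [h3 [h4 h5]]]]];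
have m1 := m 1%N erefl; have m2 := m 2%N erefl; have m3 := m 3%N erefl;
have m4 := m 4%N erefl; have m5 := m 5%N erefl;
rewrite /index_iota /= !big_cons big_nil /=; lra.
Qed.

Lemma B_le (R : realType) p q w chi : (1 <= p <= 5)%N -> (p <= q <= 10)%N ->
  B_feasible (R:=R) p q w chi -> B_obj p q w chi <= 1/2.
Proof.
move=> hp hq [m [h1 [h2 [h3 [h4 [h5 [h6 h7]]]]]]].
have m1 := m 1%N erefl; have m2 := m 2%N erefl; have m3 := m 3%N erefl;
have m4 := m 4%N erefl; have m5 := m 5%N erefl;
have m6 := m 6%N erefl; have m7 := m 7%N erefl; have m8 := m 8%N erefl;
have m9 := m 9%N erefl.
rewrite /B_obj.
move: hp hq h5 h6 h7.
case: p => [|[|[|[|[|[|p]]]]]] // _;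
case: q => [|[|[|[|[|[|[|[|[|[|[|[|q]]]]]]]]]]]] // _ /= h5 h6 h7;
rewrite /index_iota /= ?big_cons ?big_nil /=; try (have h5' := h5 erefl); lra.
Qed.


Unset Implicit Arguments.

Theorem lemma6 (R : realType) :
  (forall q : nat, (1 <= q <= 6)%N -> (A_val R q <= (1 / 2 : R)%:E)%E) /\
  (forall p q : nat, (1 <= p <= 5)%N -> (p <= q <= 10)%N ->
     (B_val R p q <= (1 / 2 : R)%:E)%E) /\
  (forall (V E : finType) (k : nat) (ends : E -> {set V}) (lab : E -> 'I_k),
     edge_colored_graph ends ->
     forall (x : V -> 'I_k -> R) (xe : E -> R),
     minecc_feasible ends lab x xe ->
     forall e : E,
     (forall w, w \in ends e -> x w (lab e) <= xe e) ->
     (exists2 w, w \in ends e & xe e = x w (lab e)) ->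
     1 / 8 < xe e < 3 / 4 ->
     forall d : V -> 'I_k,
     (gcr_prob_mistake ends lab (1 / 2) (7 / 8) x d e
        <= ((4 / 3) * xe e)%:E)%E).
Proof.
split; [|split].
- move=> q hq; apply: ge_ereal_sup => y [w [chi [hf ->]]]; rewrite lee_fin.
  exact: A_le hq hf.
- move=> p q hp hq; apply: ge_ereal_sup => y [w [chi [hf ->]]]; rewrite lee_fin.
  exact: B_le hp hq hf.
- move=> V E k ends lab hg x xe hfeas e hxe _ /andP[t1 t2] d.
  have /cards2P [u [v [_ huv]]] : #|ends e| == 2 by rewrite hg.
  exact: part3_main huv hfeas hxe t1 t2.
Qed.
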